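(* Let $(M,g_{\mu\nu})$ be a four-dimensional spacetime, let $T_{\mu\nu}$ be a given stress-energy tensor on $M$, let $\kappa=8\pi G/c^{4}$ and let $\Lambda\in\mathbb{R}$. Suppose $g_{\mu\nu}$ is a solution of Einstein's field equations $$R_{\mu\nu}-\tfrac12 R g_{\mu\nu}+\Lambda g_{\mu\nu}=\kappa T_{\mu\nu}$$ whose Ricci scalar $R=g^{\mu\nu}R_{\mu\nu}$ is equal to a constant $k$, and let $f$ be a differentiable real function. Then: (i) If $f'(k)\neq 0$, then $g_{\mu\nu}$ is a solution of the $f(R)$ field equations $f'(k)R_{\mu\nu}-\tfrac12 f(k)g_{\mu\nu}=\kappa T_{\mu\nu}$ if and only if $$\Big[\big(\tfrac{k}{2}-\Lambda\big)f'(k)-\tfrac12 f(k)\Big]g_{\mu\nu}+\big(f'(k)-1\big)\kappa T_{\mu\nu}=0.$$ (ii) If $f'(k)=0$ and $f(k)\neq \frac{k-4\Lambda}{2}$, then $g_{\mu\nu}$ is not a solution of the $f(R)$ field equations (so, for the given $T_{\mu\nu}$, GR and the $f(R)$ theory have no common solution with constant Ricci scalar $k$). (iii) If $f'(k)=0$ and $f(k)=\frac{k-4\Lambda}{2}$, then $g_{\mu\nu}$ is a solution of the $f(R)$ field equations whenever $g_{\mu\nu}$ has vanishing Ricci tensor or $g_{\mu\nu}$ is a vacuum solution ($T_{\mu\nu}=0$).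
   Context: $R_{\mu\nu}$ denotes the Ricci tensor of $g_{\mu\nu}$, $\nabla_\mu$ its Levi-Civita covariant derivative and $\square=g^{\mu\nu}\nabla_\mu\nabla_\nu$. For a differentiable function $f$, the $f(R)$ field equations (obtained by varying $\frac{1}{2\kappa}\int\sqrt{-g}\,f(R)\,d^4x+S_m$) are $$f'(R)R_{\mu\nu}-\tfrac12 f(R)g_{\mu\nu}-\nabla_\mu\nabla_\nu f'(R)+\square f'(R)\,g_{\mu\nu}=\kappa T_{\mu\nu};$$ for a metric whose Ricci scalar is the constant $k$ the derivative terms vanish and these equations reduce to $f'(k)R_{\mu\nu}-\tfrac12 f(k)g_{\mu\nu}=\kappa T_{\mu\nu}$. A vacuum solution is one with $T_{\mu\nu}=0$. *)

(* Defs.v *)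
(* Spacetime tensors are written in a local
   coordinate chart U (an open, nonempty subset of R^4); components are
   4x4 matrices indexed by 'I_4 (index 0 = time coordinate). *)
From HB Require Import structures.
From mathcomp Require Import all_boot all_order all_algebra.
From mathcomp Require Import all_classical all_reals all_analysis.
Set Implicit Arguments. Unset Strict Implicit. Unset Printing Implicit Defensive.
Import Order.TTheory GRing.Theory Num.Theory.
Import numFieldNormedType.Exports.
Local Open Scope classical_set_scope.
Local Open Scope ring_scope.

Section Geom.
Variable R : realType.

Definition pd (h : 'rV[R]_4 -> R) (i : 'I_4) (x : 'rV[R]_4) : R :=
  derive h x (delta_mx 0 i).

Definition gcomp (g : 'rV[R]_4 -> 'M[R]_4) (i j : 'I_4) : 'rV[R]_4 -> R :=
  fun y => g y i j.

Definition ginv (g : 'rV[R]_4 -> 'M[R]_4) (x : 'rV[R]_4) : 'M[R]_4 :=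
  invmx (g x).

Definition christoffel (g : 'rV[R]_4 -> 'M[R]_4) (a b c : 'I_4)
    (x : 'rV[R]_4) : R :=
  2^-1 * \sum_(d < 4) ginv g x a d *
    (pd (gcomp g d c) b x + pd (gcomp g d b) c x - pd (gcomp g b c) d x).

Definition ricci (g : 'rV[R]_4 -> 'M[R]_4) (x : 'rV[R]_4) : 'M[R]_4 :=
  \matrix_(b < 4, d < 4)
    (\sum_(a < 4) (pd (christoffel g a b d) a x - pd (christoffel g a a b) d x)
     + \sum_(a < 4) \sum_(e < 4)
         (christoffel g a a e x * christoffel g e b d x
          - christoffel g a d e x * christoffel g e a b x)).

Definition ricci_scalar (g : 'rV[R]_4 -> 'M[R]_4) (x : 'rV[R]_4) : R :=
  \tr (ginv g x *m ricci g x).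

Definition minkowski : 'M[R]_4 :=
  diag_mx (\row_(i < 4) (if i == 0 then -1 else 1)).

Definition is_spacetime (U : set 'rV[R]_4) (g : 'rV[R]_4 -> 'M[R]_4) : Prop :=
  open U /\ U !=set0 /\
  (forall x, U x ->
     (g x)^T = g x /\
     (exists P : 'M[R]_4, P \in unitmx /\ P^T *m g x *m P = minkowski) /\
     (forall i j : 'I_4, differentiable (gcomp g i j) x) /\
     (forall i j l : 'I_4, differentiable (pd (gcomp g i j) l) x)).

Definition einstein_sol (U : set 'rV[R]_4) (g T : 'rV[R]_4 -> 'M[R]_4)
    (kappa Lambda : R) : Prop :=
  forall x, U x ->
    ricci g x - (2^-1 * ricci_scalar g x) *: g x + Lambda *: g x
    = kappa *: T x.

(* f(R) field equations for a metric of constant Ricci scalar k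
   (derivative terms vanish, see context) *)
Definition fR_sol (U : set 'rV[R]_4) (g T : 'rV[R]_4 -> 'M[R]_4)
    (kappa : R) (f : R -> R) (k : R) : Prop :=
  forall x, U x ->
    derive1 f k *: ricci g x - (2^-1 * f k) *: g x = kappa *: T x.

Definition kappa_of (G c : R) : R := 8 * pi * G / c ^+ 4.

End Geom.

(* Main.v *)
Require Import Defs.
From HB Require Import structures.
From mathcomp Require Import all_boot all_order all_algebra.
From mathcomp Require Import all_classical all_reals all_analysis.
Import Order.TTheory GRing.Theory Num.Theory.
Import numFieldNormedType.Exports.
Local Open Scope classical_set_scope.
Local Open Scope ring_scope.

From mathcomp Require Import ring lra.

Lemma minkowski_det (R : realType) : \det (Defs.minkowski R) != 0.
Proof.
rewrite /Defs.minkowski det_diag; apply/prodf_neq0 => i _; rewrite mxE.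
by case: (i == 0); rewrite ?oppr_eq0 oner_eq0.
Qed.

Lemma ginvK {R : realType} {U : set 'rV[R]_4} {g x} :
  is_spacetime U g -> U x -> ginv g x *m g x = 1%:M.
Proof.
move=> [_ [_ H]] Ux; have [_ [[P [PU HP]] _]] := H x Ux.
apply: mulVmx; rewrite unitmxE unitfE.
have := minkowski_det R; rewrite -HP !det_mulmx.
by apply: contra => /eqP ->; rewrite mulr0 mul0r.
Qed.

Lemma trZ {R : realType} {U : set 'rV[R]_4} {g x} (a : R) :
  is_spacetime U g -> U x -> \tr (ginv g x *m (a *: g x)) = a * 4.
Proof.
move=> Hs Ux; rewrite -scalemxAr mxtraceZ (ginvK Hs Ux) mxtrace1.
by rewrite /= !mulr_natr.
Qed.

Lemma lin {R : realType} {a b c e : R} : a = b -> c - e = a - b -> c = e.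
Proof. move=> -> H; apply/eqP; rewrite -subr_eq0 H subrr //. Qed.

Theorem mainTheorem1 (R : realType) (U : set 'rV[R]_4)
    (g T : 'rV[R]_4 -> 'M[R]_4) (G c Lambda k : R) (f : R -> R) :
  0 < G -> 0 < c ->
  is_spacetime U g ->
  einstein_sol U g T (kappa_of G c) Lambda ->
  (forall x, U x -> ricci_scalar g x = k) ->
  (forall r : R, derivable f r 1) ->
  (* (i) *)
  (derive1 f k != 0 ->
     (fR_sol U g T (kappa_of G c) f k <->
      (forall x, U x ->
         ((k / 2 - Lambda) * derive1 f k - 2^-1 * f k) *: g x
         + ((derive1 f k - 1) * kappa_of G c) *: T x = 0)))
  /\
  (* (ii) *)
  (derive1 f k = 0 -> f k != (k - 4 * Lambda) / 2 ->
     ~ fR_sol U g T (kappa_of G c) f k)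
  /\
  (* (iii) *)
  (derive1 f k = 0 -> f k = (k - 4 * Lambda) / 2 ->
     ((forall x, U x -> ricci g x = 0) \/ (forall x, U x -> T x = 0)) ->
     fR_sol U g T (kappa_of G c) f k).
Proof.
move=> _ _ Hs HE Hk _.
rewrite /fR_sol; rewrite /einstein_sol /ricci_scalar in HE Hk.
move: (ricci g) HE Hk => ric HE Hk.
set d := derive1 f k; set kap := kappa_of G c; set F := f k.
have E : forall x, U x -> forall i j,
    ric x i j = kap * T x i j + (k / 2 - Lambda) * g x i j.
  move=> x Ux i j; have := HE x Ux; rewrite Hk //.
  move/matrixP => /(_ i j); rewrite !mxE => <-; rewrite /=; ring.
split; [move=> _; split|split].
- move=> H x Ux; apply/matrixP => i j; have := H x Ux.
  move/matrixP => /(_ i j); rewrite !mxE E //.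
  move=> H1; apply: (lin H1); ring.
- move=> H x Ux; apply/matrixP => i j; have := H x Ux.
  move/matrixP => /(_ i j); rewrite !mxE E // => H1.
  apply: (lin H1); ring.
- move=> Hd HF Hf; have [_ [[x Ux] _]] := Hs.
  have Hr : ric x = (k / 2 - Lambda - F / 2) *: g x.
    apply/matrixP => i j; have := Hf x Ux.
    move/matrixP => /(_ i j); rewrite !mxE E // Hd => H1.
    rewrite -H1 /=; ring.
  have := Hk x Ux; rewrite Hr (trZ _ Hs Ux) => Hk'.
  move/eqP: HF; apply; lra.
- move=> Hd HF [Hric|HT] x Ux.
  + have k0 : k = 0.
      by rewrite -(Hk x Ux) /ricci_scalar Hric // mulmx0 mxtrace0.
    apply/matrixP => i j; have := E x Ux i j.
    rewrite Hric // !mxE Hd HF k0 => H1.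
    apply: (lin H1); by field.
  + have Hr : ric x = (k / 2 - Lambda) *: g x.
      apply/matrixP => i j; rewrite E // HT // !mxE /=; ring.
    have := Hk x Ux; rewrite Hr (trZ _ Hs Ux) => Hk'.
    have k4 : k = 4 * Lambda by apply: (lin Hk'); field.
    have F0 : F = 0 by rewrite HF k4 subrr mul0r.
    apply/matrixP => i j; rewrite HT // !mxE Hd F0; ring.
Qed.
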